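(* Let $t\ge0$, $h\ge0$ and $i$ be integers with $-t\le i\le h$. Let $\Phi(z)=\sum_{n\ge0}c_nz^n$, where $c_n$ is the number of Deutsch paths of $n$ steps from $(0,0)$ to $(n,i)$ that stay within levels $-t,\dots,h$ throughout. Let $v=v(z)$ be the power series with $v(0)=0$ satisfying $z=\frac{v}{1+v+v^2}$. Then $$\Phi(z)=\frac{(1+v)^{-i-2}(1-v^{i+t+1})\,v\,(1-v^{h+1})(1+v+v^2)}{(1-v)(1-v^{h+t+3})}\quad\text{for } i<0,$$ $$\Phi(z)=\frac{v^{i}(1-v^{t+2})(1-v^{2-i+h})(1+v+v^2)}{(1-v)(1+v)^{i+2}(1-v^{h+t+3})}\quad\text{for } i\ge0.$$
   Context: A Deutsch path is a lattice path whose steps are up-steps $(1,1)$ and down-steps $(1,-k)$ for any integer $k\ge1$. The series $v$ is given explicitly by $v=\frac{1-z-\sqrt{1-2z-3z^2}}{2z}$. *)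

(* Defs.v *)
From Stdlib Require Import Reals ZArith List.
From Coquelicot Require Import Coquelicot.
Open Scope R_scope.

(* A Deutsch step: an up-step (+1) or a down-step (-k) with k >= 1.
   A path is recorded by the list of the vertical displacements of its steps. *)
Definition deutsch_step (s : Z) : Prop := s = 1%Z \/ (s <= -1)%Z.

Fixpoint stays_within (t h cur : Z) (p : list Z) : Prop :=
  match p with
  | nil => True
  | s :: p' => (- t <= cur + s <= h)%Z /\ stays_within t h (cur + s)%Z p'
  end.

(* p is a Deutsch path of n steps from (0,0) to (n,i) staying within
   levels -t..h throughout (the start level 0 is in range since t,h >= 0) *)
Definition bounded_deutsch_path (t h i : Z) (n : nat) (p : list Z) : Prop :=
  length p = n /\ List.Forall deutsch_step p /\ stays_within t h 0%Z p
  /\ fold_right Z.add 0%Z p = i.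

(* the series v, given explicitly (for z <> 0) *)
Definition v_fun (z : R) : R := (1 - z - sqrt (1 - 2 * z - 3 * z ^ 2)) / (2 * z).

(* Main.v *)
Require Import Defs.
From Stdlib Require Import Reals ZArith List Lia Lra.
From Coquelicot Require Import Coquelicot.
Open Scope R_scope.

Definition inrb (t h j : Z) : bool := (Z.leb (- t) j && Z.leb j h)%bool.

Fixpoint Ed (E : Z -> list (list Z)) (tgt o : Z) (m : nat) : list (list Z) :=
  match m with
  | O => nil
  | S m => map (fun p => p ++ ((tgt - (o + 1))%Z :: nil)) (E (o + 1)%Z) ++ Ed E tgt (o + 1)%Z m
  end.

Fixpoint En (t h : Z) (n : nat) (j : Z) : list (list Z) :=
  match n with
  | O => if Z.eqb j 0 then nil :: nil else nil
  | S n => if inrb t h j then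
             map (fun p => p ++ (1%Z :: nil)) (En t h n (j - 1)) ++ Ed (En t h n) j j (Z.to_nat (h - j))
           else nil
  end.

Notation zsum p := (fold_right Z.add 0%Z p).

Lemma zsum_app1 p s : zsum (p ++ s :: nil) = (zsum p + s)%Z.
Proof. rewrite fold_right_app. simpl. induction p; simpl; lia. Qed.

Lemma stays_app t h cur p s :
  stays_within t h cur (p ++ s :: nil) <->
  stays_within t h cur p /\ (- t <= cur + zsum p + s <= h)%Z.
Proof.
  revert cur; induction p as [|a p IH]; intro cur; simpl.
  - simpl. replace (cur + 0 + s)%Z with (cur + s)%Z by lia. tauto.
  - rewrite IH. simpl.
    replace (cur + (a + zsum p) + s)%Z with (cur + a + zsum p + s)%Z by lia. tauto.
Qed.

Lemma level_in t h cur p : (- t <= cur <= h)%Z -> stays_within t h cur p ->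
  (- t <= cur + zsum p <= h)%Z.
Proof.
  revert cur; induction p as [|a p IH]; intros cur Hc Hs; simpl in *.
  - simpl; lia.
  - destruct Hs as [H1 H2]. specialize (IH _ H1 H2). simpl. lia.
Qed.

Lemma in_map_app1 (L : list (list Z)) s p :
  In p (map (fun q => q ++ s :: nil) L) <-> exists q, p = q ++ s :: nil /\ In q L.
Proof.
  rewrite in_map_iff. split; intros [q [H1 H2]]; exists q; split; auto.
Qed.

Lemma In_Ed E tgt o m p :
  In p (Ed E tgt o m) <->
  exists k, (1 <= k <= m)%nat /\ exists q, p = q ++ ((tgt - (o + Z.of_nat k))%Z :: nil) /\ In q (E (o + Z.of_nat k)%Z).
Proof.
  revert o; induction m as [|m IH]; intro o; simpl.
  - split; [tauto|]. intros [k [Hk _]]; lia.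
  - rewrite in_app_iff, in_map_app1, IH. split.
    + intros [[q [H1 H2]]|[k [Hk [q [H1 H2]]]]].
      * exists 1%nat; split; [lia|]. exists q. simpl Z.of_nat. auto.
      * exists (S k); split; [lia|]. exists q. rewrite Nat2Z.inj_succ.
        replace (o + Z.succ (Z.of_nat k))%Z with (o + 1 + Z.of_nat k)%Z by lia. auto.
    + intros [k [Hk [q [H1 H2]]]]. destruct k as [|k]; [lia|].
      destruct k as [|k].
      * left. exists q. simpl Z.of_nat in *. auto.
      * right. exists (S k). split; [lia|]. exists q.
        replace (o + 1 + Z.of_nat (S k))%Z with (o + Z.of_nat (S (S k)))%Z by lia. auto.
Qed.

Lemma En_spec t h (ht : (0 <= t)%Z) (hh : (0 <= h)%Z) n j p :
  In p (En t h n j) <-> bounded_deutsch_path t h j n p.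
Proof.
  unfold bounded_deutsch_path.
  revert j p; induction n as [|n IH]; intros j p; simpl.
  - destruct (Z.eqb_spec j 0).
    + simpl. split.
      * intros [<-|[]]. simpl. repeat split; auto.
      * intros [Hl [_ [_ Hs]]]. destruct p; [auto|simpl in Hl; lia].
    + simpl. split; [tauto|]. intros [Hl [_ [_ Hs]]]. destruct p; [|simpl in Hl; lia].
      simpl in Hs. lia.
  - destruct (inrb t h j) eqn:Hj.
    + unfold inrb in Hj. apply andb_prop in Hj. destruct Hj as [Hj1 Hj2].
      apply Z.leb_le in Hj1. apply Z.leb_le in Hj2.
      rewrite in_app_iff, in_map_app1, In_Ed. split.
      * intros [[q [-> Hq]]|[k [Hk [q [-> Hq]]]]]; apply IH in Hq;
          destruct Hq as [Hl [Hf [Hs Hz]]].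
        -- rewrite length_app, Hl. simpl. split; [lia|].
           split; [apply Forall_app; split; auto; constructor; [unfold deutsch_step; left; reflexivity|constructor]|].
           rewrite stays_app, zsum_app1. split; [split; auto; lia | lia].
        -- rewrite length_app, Hl. simpl. split; [lia|].
           split; [apply Forall_app; split; auto; constructor; [unfold deutsch_step; right; lia|constructor]|].
           rewrite stays_app, zsum_app1. split; [split; auto; lia | lia].
      * intros [Hl [Hf [Hs Hz]]].
        destruct (exists_last (l := p)) as [q [s ->]].
        { intros ->; simpl in Hl; lia. }
        rewrite length_app in Hl; simpl in Hl.
        apply Forall_app in Hf; destruct Hf as [Hfq Hfs]. apply Forall_inv in Hfs as Hds.
        apply stays_app in Hs; destruct Hs as [Hsq Hr].
        rewrite zsum_app1 in Hz.
        pose proof (level_in t h 0 q ltac:(lia) Hsq) as Hlev.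
        destruct Hds as [Hs1|Hs1].
        -- left. exists q. split; [subst s; auto|]. apply IH. repeat split; auto; lia.
        -- right. exists (Z.to_nat (- s)). split; [lia|]. exists q. split.
           ++ f_equal. f_equal. lia.
           ++ apply IH. repeat split; auto; try lia.
    + split; [intros []|]. intros [Hl [Hf [Hs Hz]]].
      destruct (exists_last (l := p)) as [q [s ->]].
      { intros ->; simpl in Hl; lia. }
      apply stays_app in Hs; destruct Hs as [Hsq Hr].
      rewrite zsum_app1 in Hz. unfold inrb in Hj.
      apply Bool.andb_false_iff in Hj. destruct Hj as [Hj|Hj]; apply Z.leb_gt in Hj; lia.
Qed.

Lemma NoDup_map_app1 (L : list (list Z)) s : NoDup L -> NoDup (map (fun q => q ++ s :: nil) L).
Proof.
  induction 1; simpl; constructor; auto.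
  rewrite in_map_app1. intros [q [Hq Hin]]. apply app_inj_tail in Hq. destruct Hq; subst; auto.
Qed.

Lemma NoDup_Ed E tgt o m : (forall x, NoDup (E x)) -> NoDup (Ed E tgt o m).
Proof.
  intro HE. revert o; induction m as [|m IH]; intro o; simpl; [constructor|].
  apply NoDup_app; auto. apply NoDup_map_app1; auto.
  intros p Hp1 Hp2. apply in_map_app1 in Hp1. apply In_Ed in Hp2.
  destruct Hp1 as [q [-> _]]. destruct Hp2 as [k [Hk [q' [Heq _]]]].
  apply app_inj_tail in Heq. destruct Heq as [_ Heq]. lia.
Qed.

Lemma NoDup_En t h n j : NoDup (En t h n j).
Proof.
  revert j; induction n as [|n IH]; intro j; simpl.
  - destruct (Z.eqb j 0); repeat constructor; auto.
  - destruct (inrb t h j); [|constructor].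
    apply NoDup_app. apply NoDup_map_app1; auto. apply NoDup_Ed; auto.
    intros p Hp1 Hp2. apply in_map_app1 in Hp1. apply In_Ed in Hp2.
    destruct Hp1 as [q [-> _]]. destruct Hp2 as [k [Hk [q' [Heq _]]]].
    apply app_inj_tail in Heq. destruct Heq as [_ Heq]. lia.
Qed.

Lemma count_eq (l l' : list (list Z)) : NoDup l -> NoDup l' -> (forall p, In p l <-> In p l') ->
  length l = length l'.
Proof.
  intros H1 H2 H. apply Nat.le_antisymm; apply NoDup_incl_length; auto; intros p; apply H.
Qed.

Fixpoint dsum (g : Z -> R) (o : Z) (m : nat) : R :=
  match m with O => 0 | S m => g (o + 1)%Z + dsum g (o + 1)%Z m end.

Lemma length_Ed E tgt o m : INR (length (Ed E tgt o m)) = dsum (fun x => INR (length (E x))) o m.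
Proof.
  revert o; induction m as [|m IH]; intro o; simpl; auto.
  rewrite length_app, plus_INR, length_map, IH. auto.
Qed.

Definition aa t h x n := INR (length (En t h n x)).

Lemma aa_S t h n j : aa t h j (S n) =
  if inrb t h j then aa t h (j - 1)%Z n + dsum (fun x => aa t h x n) j (Z.to_nat (h - j)) else 0.
Proof.
  unfold aa; simpl. destruct (inrb t h j); auto.
  rewrite length_app, plus_INR, length_map, length_Ed. auto.
Qed.

Lemma aa_0 t h j : aa t h j 0 = if Z.eqb j 0 then 1 else 0.
Proof. unfold aa; simpl. destruct (Z.eqb j 0); simpl; auto. Qed.

Lemma aa_out t h (ht : (0 <= t)%Z) (hh : (0 <= h)%Z) x n : inrb t h x = false -> aa t h x n = 0.
Proof.
  intro Hx. unfold aa. destruct n; simpl.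
  - destruct (Z.eqb_spec x 0); auto. subst. unfold inrb in Hx.
    apply Bool.andb_false_iff in Hx. destruct Hx as [Hj|Hj]; apply Z.leb_gt in Hj; lia.
  - rewrite Hx. auto.
Qed.

Lemma aa_nonneg t h x n : 0 <= aa t h x n.
Proof. apply pos_INR. Qed.

Lemma dsum_le g B o m : (forall x, g x <= B) -> dsum g o m <= INR m * B.
Proof.
  intro H. revert o; induction m as [|m IH]; intro o.
  - simpl; lra.
  - cbn [dsum]. rewrite S_INR. specialize (IH (o+1)%Z). specialize (H (o+1)%Z). lra.
Qed.

Lemma aa_bound t h (ht : (0 <= t)%Z) (hh : (0 <= h)%Z) x n :
  aa t h x n <= IZR (h + t + 1) ^ n.
Proof.
  revert x; induction n as [|n IH]; intro x.
  - rewrite aa_0. simpl. destruct (Z.eqb x 0); lra.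
  - rewrite aa_S. destruct (inrb t h x) eqn:Hx.
    + unfold inrb in Hx. apply andb_prop in Hx. destruct Hx as [Hj1 Hj2].
      apply Z.leb_le in Hj1. apply Z.leb_le in Hj2.
      pose proof (dsum_le (fun y => aa t h y n) _ x (Z.to_nat (h - x)) IH).
      pose proof (IH (x - 1)%Z).
      assert (INR (Z.to_nat (h - x)) <= IZR (h + t)).
      { rewrite INR_IZR_INZ. apply IZR_le. lia. }
      assert (0 <= IZR (h + t + 1) ^ n) by (apply pow_le; apply IZR_le; lia).
      set (K := IZR (h + t + 1)) in *. set (P := K ^ n) in *. simpl. fold P. assert (HK : K = IZR (h + t) + 1) by (unfold K; rewrite plus_IZR; auto). rewrite HK. assert (INR (Z.to_nat (h - x)) * P <= IZR (h + t) * P) by (apply Rmult_le_compat_r; [exact H2 | exact H1]). nra.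
    + simpl. assert (0 <= IZR (h + t + 1) ^ n) by (apply pow_le; apply IZR_le; lia).
      assert (0 <= IZR (h + t + 1)) by (apply IZR_le; lia). nra.
Qed.

Lemma is_series_Rmult a l c : is_series a l -> is_series (fun n => c * a n) (c * l).
Proof. intro H. exact (is_series_scal c a l H). Qed.

Lemma is_series_Rplus a b la lb : is_series a la -> is_series b lb ->
  is_series (fun n => a n + b n) (la + lb).
Proof. intros H H0. exact (is_series_plus _ _ _ _ H H0). Qed.

Lemma is_series_zero : is_series (fun _ => 0) 0.
Proof.
  assert (H : Rabs (1/2) < 1) by (rewrite Rabs_pos_eq; lra).
  pose proof (is_series_Rmult _ _ 0 (is_series_geom _ H)) as H1.
  rewrite Rmult_0_l in H1. eapply is_series_ext; [|exact H1]. intro; simpl; ring.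
Qed.

Lemma dsum_series (g : Z -> nat -> R) (L : Z -> R) o m :
  (forall x, is_series (g x) (L x)) ->
  is_series (fun n => dsum (fun x => g x n) o m) (dsum L o m).
Proof.
  intro H. revert o; induction m as [|m IH]; intro o; simpl.
  - apply is_series_zero.
  - apply is_series_Rplus; auto.
Qed.

Lemma dsum_mult g c o m : dsum g o m * c = dsum (fun x => g x * c) o m.
Proof. revert o; induction m as [|m IH]; intro o; simpl; [ring|]. rewrite <- IH. ring. Qed.

Lemma dsum_ext g1 g2 o m : (forall k, (1 <= k <= m)%nat -> g1 (o + Z.of_nat k)%Z = g2 (o + Z.of_nat k)%Z) ->
  dsum g1 o m = dsum g2 o m.
Proof.
  revert o; induction m as [|m IH]; intros o H; simpl; auto.
  f_equal.
  - specialize (H 1%nat ltac:(lia)). simpl in H. auto.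
  - apply IH. intros k Hk. specialize (H (S k) ltac:(lia)).
    replace (o + 1 + Z.of_nat k)%Z with (o + Z.of_nat (S k))%Z by lia. auto.
Qed.

Lemma dsum_minus g1 g2 o m : dsum g1 o m - dsum g2 o m = dsum (fun x => g1 x - g2 x) o m.
Proof. revert o; induction m as [|m IH]; intro o; simpl; [ring|]. rewrite <- IH. ring. Qed.

Lemma dsum_abs g B o m : (forall k, (1 <= k <= m)%nat -> Rabs (g (o + Z.of_nat k)%Z) <= B) ->
  Rabs (dsum g o m) <= INR m * B.
Proof.
  revert o; induction m as [|m IH]; intros o H.
  - simpl. rewrite Rabs_R0. lra.
  - cbn [dsum]. rewrite S_INR.
    assert (H1 : Rabs (g (o + 1)%Z) <= B) by (specialize (H 1%nat ltac:(lia)); simpl in H; auto).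
    assert (H2 : Rabs (dsum g (o + 1)%Z m) <= INR m * B).
    { apply IH. intros k Hk. specialize (H (S k) ltac:(lia)).
      replace (o + 1 + Z.of_nat k)%Z with (o + Z.of_nat (S k))%Z by lia. auto. }
    pose proof (Rabs_triang (g (o + 1)%Z) (dsum g (o + 1)%Z m)). lra.
Qed.

Lemma aa_ex t h (ht : (0 <= t)%Z) (hh : (0 <= h)%Z) z x :
  Rabs z * IZR (h + t + 1) < 1 -> ex_series (fun n => aa t h x n * z ^ n).
Proof.
  intro Hz. apply ex_series_Rabs.
  apply (@ex_series_le R_AbsRing R_CompleteNormedModule _ (fun n => (IZR (h + t + 1) * Rabs z) ^ n)).
  - intro n. change norm with Rabs. simpl. rewrite Rabs_Rabsolu, Rabs_mult, <- RPow_abs.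
    rewrite Rpow_mult_distr. rewrite (Rabs_pos_eq (aa t h x n)) by apply aa_nonneg.
    apply Rmult_le_compat_r. apply pow_le, Rabs_pos. apply aa_bound; auto.
  - apply ex_series_geom. rewrite Rabs_pos_eq.
    + lra.
    + apply Rmult_le_pos. apply IZR_le; lia. apply Rabs_pos.
Qed.

Definition SS t h z x := Series (fun n => aa t h x n * z ^ n).

Lemma SS_rec t h (ht : (0 <= t)%Z) (hh : (0 <= h)%Z) z j :
  Rabs z * IZR (h + t + 1) < 1 -> (- t <= j <= h)%Z ->
  SS t h z j = (if Z.eqb j 0 then 1 else 0) + z * (SS t h z (j - 1) + dsum (SS t h z) j (Z.to_nat (h - j))).
Proof.
  intros Hz Hj. unfold SS at 1. rewrite Series_incr_1 by (apply aa_ex; auto).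
  rewrite aa_0. simpl pow. f_equal; [ring|].
  apply is_series_unique.
  assert (Hin : inrb t h j = true).
  { unfold inrb. apply andb_true_intro. split; apply Z.leb_le; lia. }
  eapply is_series_ext.
  2:{ apply is_series_Rmult. apply is_series_Rplus.
      - apply Series_correct. apply (aa_ex t h ht hh z (j - 1)%Z Hz).
      - apply (dsum_series (fun x n => aa t h x n * z ^ n)). intro x. apply Series_correct, aa_ex; auto. }
  intro n. simpl. rewrite aa_S, Hin. rewrite <- dsum_mult. ring.
Qed.

Lemma SS_out t h (ht : (0 <= t)%Z) (hh : (0 <= h)%Z) z x : inrb t h x = false -> SS t h z x = 0.
Proof.
  intro Hx. unfold SS. rewrite (Series_ext _ (fun _ => 0)).
  - apply is_series_unique, is_series_zero.
  - intro n. rewrite aa_out; auto. ring.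
Qed.

Lemma fr_ge a l : In a l -> a <= fold_right Rmax 0 l.
Proof.
  induction l as [|b l IH]; simpl; [tauto|]. intros [->|H].
  - apply Rmax_l.
  - eapply Rle_trans; [apply IH; auto|apply Rmax_r].
Qed.

Lemma fr_le B l : 0 <= B -> (forall a, In a l -> a <= B) -> fold_right Rmax 0 l <= B.
Proof.
  intros H0 H. induction l as [|b l IH]; simpl; auto.
  apply Rmax_lub. apply H; simpl; auto. apply IH. intros; apply H; simpl; auto.
Qed.

Lemma fr_nonneg l : 0 <= fold_right Rmax 0 l.
Proof. induction l; simpl; [lra|]. eapply Rle_trans; [exact IHl|apply Rmax_r]. Qed.

Definition sysP t h z (X : Z -> R) :=
  forall j, (- t <= j <= h)%Z ->
    X j = (if Z.eqb j 0 then 1 else 0) + z * (X (j - 1)%Z + dsum X j (Z.to_nat (h - j))).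

Lemma sys_uniq t h (ht : (0 <= t)%Z) (hh : (0 <= h)%Z) z X Y :
  Rabs z * IZR (h + t + 1) < 1 -> sysP t h z X -> sysP t h z Y ->
  X (- t - 1)%Z = Y (- t - 1)%Z ->
  forall j, (- t <= j <= h)%Z -> X j = Y j.
Proof.
  intros Hz HX HY Hb.
  set (D := fun x => X x - Y x).
  set (M := fold_right Rmax 0 (map (fun k => Rabs (D (- t + Z.of_nat k)%Z)) (seq 0 (Z.to_nat (h + t + 1))))).
  assert (HM : forall j, (- t <= j <= h)%Z -> Rabs (D j) <= M).
  { intros j Hj. unfold M. apply fr_ge. apply in_map_iff. exists (Z.to_nat (j + t)). split.
    - f_equal. f_equal. lia.
    - apply in_seq. lia. }
  assert (HM0 : 0 <= M) by apply fr_nonneg.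
  assert (HK : 0 <= IZR (h + t + 1)) by (apply IZR_le; lia).
  assert (HD : forall j, (- t <= j <= h)%Z -> Rabs (D j) <= Rabs z * IZR (h + t + 1) * M).
  { intros j Hj. unfold D. rewrite (HX j Hj), (HY j Hj).
    replace ((if (j =? 0)%Z then 1 else 0) + z * (X (j - 1)%Z + dsum X j (Z.to_nat (h - j))) -
      ((if (j =? 0)%Z then 1 else 0) + z * (Y (j - 1)%Z + dsum Y j (Z.to_nat (h - j)))))
      with (z * (D (j - 1)%Z + dsum D j (Z.to_nat (h - j)))).
    2:{ unfold D. rewrite <- dsum_minus. ring. }
    rewrite Rabs_mult. rewrite Rmult_assoc. apply Rmult_le_compat_l; [apply Rabs_pos|].
    assert (H1 : Rabs (D (j - 1)%Z) <= M).
    { destruct (Z.eq_dec j (- t)) as [->|Hne].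
      - unfold D. replace (- t - 1)%Z with (- t - 1)%Z by lia. rewrite Hb.
        replace (Y (- t - 1)%Z - Y (- t - 1)%Z) with 0 by ring. rewrite Rabs_R0. auto.
      - apply HM. lia. }
    assert (H2 : Rabs (dsum D j (Z.to_nat (h - j))) <= INR (Z.to_nat (h - j)) * M).
    { apply dsum_abs. intros k Hk. apply HM. lia. }
    assert (H3 : INR (Z.to_nat (h - j)) + 1 <= IZR (h + t + 1)).
    { rewrite INR_IZR_INZ. rewrite <- plus_IZR. apply IZR_le. lia. }
    pose proof (Rabs_triang (D (j - 1)%Z) (dsum D j (Z.to_nat (h - j)))).
    assert ((INR (Z.to_nat (h - j)) + 1) * M <= IZR (h + t + 1) * M) by (apply Rmult_le_compat_r; lra).
    nra. }
  assert (HMle : M <= Rabs z * IZR (h + t + 1) * M).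
  { unfold M at 1. apply fr_le.
    - apply Rmult_le_pos; auto. apply Rmult_le_pos; auto. apply Rabs_pos.
    - intros a Ha. apply in_map_iff in Ha. destruct Ha as [k [<- Hk]]. apply in_seq in Hk.
      apply HD. lia. }
  assert (HM00 : M = 0).
  { assert (0 <= Rabs z * IZR (h + t + 1)) by (apply Rmult_le_pos; auto; apply Rabs_pos). nra. }
  intros j Hj. specialize (HM j Hj). rewrite HM00 in HM. unfold D in HM.
  pose proof (Rabs_pos (X j - Y j)). assert (Rabs (X j - Y j) = 0) by lra.
  apply Rabs_eq_0 in H0. lra.
Qed.

Definition Gneg t h v j := powerRZ (1 + v) (- j - 2) * (1 - powerRZ v (j + t + 1)) * v
             * (1 - powerRZ v (h + 1)) * (1 + v + v ^ 2)
           / ((1 - v) * (1 - powerRZ v (h + t + 3))).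
Definition Gpos t h v j := powerRZ v j * (1 - powerRZ v (t + 2)) * (1 - powerRZ v (2 - j + h))
             * (1 + v + v ^ 2)
           / ((1 - v) * powerRZ (1 + v) (j + 2) * (1 - powerRZ v (h + t + 3))).
Definition GG t h v j := if (j <? 0)%Z then Gneg t h v j else Gpos t h v j.

Ltac zsimp := repeat match goal with
  | |- context [(?a <? 0)%Z] =>
      first [rewrite (proj2 (Z.ltb_lt a 0)) by lia | rewrite (proj2 (Z.ltb_ge a 0)) by lia]
  | |- context [(?a =? 0)%Z] =>
      first [rewrite (proj2 (Z.eqb_eq a 0)) by lia | rewrite (proj2 (Z.eqb_neq a 0)) by lia]
  end.

Ltac pexp v Hv Hv1 := unfold Z.sub in *;
  repeat (rewrite ?Z.opp_add_distr, ?Z.opp_involutive in *;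
          rewrite ?(powerRZ_add v) in * by exact Hv;
          rewrite ?(powerRZ_add (1 + v)) in * by exact Hv1;
          rewrite ?powerRZ_neg' in *).

Ltac nz := repeat split;
  match goal with
  | |- ?a <> 0 => first [ assumption | (apply powerRZ_NOR; assumption)
      | (let HH := fresh in intro HH; match goal with H : ?b <> 0 |- _ => apply H; rewrite <- HH; ring end) ]
  end.

Ltac finish v z Hv Hv1 Hz :=
  replace z with (v / (1 + v + v ^ 2)) by (field_simplify_eq; auto; lra);
  pexp v Hv Hv1; simpl in *; field; nz.

Lemma tt_negneg t h v z j (Hv : v <> 0) (Hv1 : 1 + v <> 0) (Hv2 : 1 - v <> 0)
  (Hq : 1 + v + v ^ 2 <> 0) (Hd : 1 - powerRZ v (h + t + 3) <> 0) (Hz : z * (1 + v + v ^ 2) = v)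
  (Hj : (j <= -2)%Z) :
  GG t h v j - GG t h v (j + 1) - (if (j =? 0)%Z then 1 else 0) + (if (j + 1 =? 0)%Z then 1 else 0)
   - z * GG t h v (j - 1) + z * GG t h v j - z * GG t h v (j + 1) = 0.
Proof.
  unfold GG. zsimp. unfold Gneg.
  finish v z Hv Hv1 Hz.
Qed.

Definition TT t h v z j := GG t h v j - GG t h v (j + 1) - (if (j =? 0)%Z then 1 else 0) + (if (j + 1 =? 0)%Z then 1 else 0)
   - z * GG t h v (j - 1) + z * GG t h v j - z * GG t h v (j + 1).

Lemma TT_0 t h v z j (Hv : v <> 0) (Hv1 : 1 + v <> 0) (Hv2 : 1 - v <> 0)
  (Hq : 1 + v + v ^ 2 <> 0) (Hd : 1 - powerRZ v (h + t + 3) <> 0) (Hz : z * (1 + v + v ^ 2) = v) :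
  TT t h v z j = 0.
Proof.
  unfold TT.
  destruct (Z_lt_le_dec j (-1)) as [Hj|Hj].
  { unfold GG. zsimp. unfold Gneg. finish v z Hv Hv1 Hz. }
  destruct (Z.eq_dec j (-1)) as [->|Hj1].
  { unfold GG. zsimp. unfold Gneg, Gpos. finish v z Hv Hv1 Hz. }
  destruct (Z.eq_dec j 0) as [->|Hj0].
  { unfold GG. zsimp. unfold Gneg, Gpos. finish v z Hv Hv1 Hz. }
  unfold GG. zsimp. unfold Gpos. finish v z Hv Hv1 Hz.
Qed.

Lemma BD_0 t h v z (hh : (0 <= h)%Z) (Hv : v <> 0) (Hv1 : 1 + v <> 0) (Hv2 : 1 - v <> 0)
  (Hq : 1 + v + v ^ 2 <> 0) (Hd : 1 - powerRZ v (h + t + 3) <> 0) (Hz : z * (1 + v + v ^ 2) = v) :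
  GG t h v h - (if (h =? 0)%Z then 1 else 0) - z * GG t h v (h - 1) = 0.
Proof.
  destruct (Z.eq_dec h 0) as [->|Hh0].
  { unfold GG. zsimp. unfold Gneg, Gpos. finish v z Hv Hv1 Hz. }
  unfold GG. zsimp. unfold Gpos. finish v z Hv Hv1 Hz.
Qed.

Lemma GG_sys t h (ht : (0 <= t)%Z) (hh : (0 <= h)%Z) v z (Hv : v <> 0) (Hv1 : 1 + v <> 0) (Hv2 : 1 - v <> 0)
  (Hq : 1 + v + v ^ 2 <> 0) (Hd : 1 - powerRZ v (h + t + 3) <> 0) (Hz : z * (1 + v + v ^ 2) = v) :
  sysP t h z (GG t h v).
Proof.
  assert (H : forall d j, (h - j)%Z = Z.of_nat d ->
    GG t h v j = (if (j =? 0)%Z then 1 else 0) + z * (GG t h v (j - 1)%Z + dsum (GG t h v) j (Z.to_nat (h - j)))).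
  { induction d as [|d IH]; intros j Hj.
    - assert (j = h) by lia. subst j. replace (h - h)%Z with 0%Z by lia. simpl.
      pose proof (BD_0 t h v z hh Hv Hv1 Hv2 Hq Hd Hz). lra.
    - replace (Z.to_nat (h - j)) with (S (Z.to_nat (h - (j + 1)))) by lia. cbn [dsum].
      specialize (IH (j + 1)%Z ltac:(lia)).
      replace (j + 1 - 1)%Z with j in IH by ring.
      pose proof (TT_0 t h v z j Hv Hv1 Hv2 Hq Hd Hz) as HT. unfold TT in HT. lra. }
  intros j Hj. apply (H (Z.to_nat (h - j))). lia.
Qed.

Lemma GG_bot t h v (ht : (0 <= t)%Z) : GG t h v (- t - 1)%Z = 0.
Proof.
  unfold GG. destruct (Z.ltb_spec (- t - 1) 0).
  - unfold Gneg. replace (- t - 1 + t + 1)%Z with 0%Z by ring. simpl. unfold Rdiv. ring.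
  - lia.
Qed.

Lemma vfacts z : 0 < Rabs z < 1/10 ->
  v_fun z <> 0 /\ Rabs (v_fun z) < 1/2 /\ z * (1 + v_fun z + v_fun z ^ 2) = v_fun z.
Proof.
  intro Hz. set (v := v_fun z).
  assert (Hz0 : z <> 0) by (intro E; rewrite E, Rabs_R0 in Hz; lra).
  assert (Hzb : -1/10 < z < 1/10) by (destruct Hz as [_ Hz']; apply Rabs_def2 in Hz' as [? ?]; lra).
  set (D := 1 - 2 * z - 3 * z ^ 2).
  assert (HD : 0 <= D) by (unfold D; nra).
  set (s := sqrt D).
  assert (Hs2 : s * s = D) by (apply sqrt_sqrt; auto).
  assert (Hs0 : 0 <= s) by apply sqrt_pos.
  assert (Hs1 : 1/2 <= s) by (unfold D in Hs2; nra).
  assert (Hu : v * (2 * z) = 1 - z - s) by (unfold v, v_fun; fold D; fold s; field; auto).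
  assert (Hw : v * (1 - z + s) = 2 * z).
  { apply (Rmult_eq_reg_l (2 * z)); [|lra].
    replace (2 * z * (v * (1 - z + s))) with ((v * (2 * z)) * (1 - z + s)) by ring.
    rewrite Hu. unfold D in Hs2. nra. }
  split; [|split].
  - intro E. rewrite E in Hw. lra.
  - assert (Rabs v * (1 - z + s) = 2 * Rabs z).
    { rewrite <- (Rabs_pos_eq (1 - z + s)) by lra. rewrite <- Rabs_mult, Hw, Rabs_mult, Rabs_pos_eq; lra. }
    pose proof (Rabs_pos v). nra.
  - apply (Rmult_eq_reg_l (4 * z)); [|lra].
    replace (4 * z * (z * (1 + v + v ^ 2))) with (4 * z ^ 2 + 2 * z * (v * (2 * z)) + (v * (2 * z)) ^ 2) by ring.
    replace (4 * z * v) with (2 * (v * (2 * z))) by ring.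
    rewrite Hu. unfold D in Hs2. nra.
Qed.

Lemma pow_ne1 v n : Rabs v < 1/2 -> (0 < n)%Z -> 1 - powerRZ v n <> 0.
Proof.
  intros Hv Hn. replace n with (Z.of_nat (Z.to_nat n)) by lia. rewrite <- pow_powerRZ.
  pose proof (pow_lt_1_compat (Rabs v) (Z.to_nat n) ltac:(split; [apply Rabs_pos|lra]) ltac:(lia)).
  rewrite RPow_abs in H. intro E. assert (v ^ Z.to_nat n = 1) by lra. rewrite H0, Rabs_R1 in H. lra.
Qed.

Theorem theorem5 (t h i : Z) (ht : (0 <= t)%Z) (hh : (0 <= h)%Z)
  (hi : (- t <= i <= h)%Z) (c : nat -> nat)
  (Hc : forall n : nat, exists l : list (list Z),
          NoDup l /\ (forall p, In p l <-> bounded_deutsch_path t h i n p)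
          /\ c n = length l) :
  exists r : R, 0 < r /\
    forall z : R, 0 < Rabs z < r ->
      let v := v_fun z in
      ((i < 0)%Z ->
        is_series (fun n => INR (c n) * z ^ n)
          (powerRZ (1 + v) (- i - 2) * (1 - powerRZ v (i + t + 1)) * v
             * (1 - powerRZ v (h + 1)) * (1 + v + v ^ 2)
           / ((1 - v) * (1 - powerRZ v (h + t + 3)))))
      /\
      ((0 <= i)%Z ->
        is_series (fun n => INR (c n) * z ^ n)
          (powerRZ v i * (1 - powerRZ v (t + 2)) * (1 - powerRZ v (2 - i + h))
             * (1 + v + v ^ 2)
           / ((1 - v) * powerRZ (1 + v) (i + 2) * (1 - powerRZ v (h + t + 3))))).
Proof.
  set (K := IZR (h + t + 1)).
  assert (HK : 1 <= K) by (unfold K; apply IZR_le; lia).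
  exists (/ (10 * K)). split.
  { apply Rinv_0_lt_compat. lra. }
  intros z Hz v.
  assert (Hr : / (10 * K) <= 1/10).
  { apply (Rmult_le_reg_l (10 * K)); [lra|]. rewrite Rinv_r by lra. nra. }
  assert (HzK : Rabs z * K < 1).
  { assert (Rabs z * (10 * K) < 1).
    { apply (Rmult_lt_reg_r (/ (10 * K))). apply Rinv_0_lt_compat; lra.
      rewrite Rmult_assoc, Rinv_r, Rmult_1_l, Rmult_1_r by lra. lra. }
    pose proof (Rabs_pos z). nra. }
  destruct (vfacts z ltac:(lra)) as [Hv0 [Hvb Hvz]]. fold v in Hv0, Hvb, Hvz.
  assert (Hv1 : 1 + v <> 0) by (intro E; apply Rabs_def2 in Hvb as [? ?]; lra).
  assert (Hv2 : 1 - v <> 0) by (intro E; apply Rabs_def2 in Hvb as [? ?]; lra).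
  assert (Hq : 1 + v + v ^ 2 <> 0) by (intro E; nra).
  assert (Hd : 1 - powerRZ v (h + t + 3) <> 0) by (apply pow_ne1; auto; lia).
  assert (Heq : SS t h z i = GG t h v i).
  { apply (sys_uniq t h ht hh z); auto.
    - intros j Hj. apply SS_rec; auto.
    - apply GG_sys; auto.
    - rewrite GG_bot by auto. apply SS_out; auto.
      unfold inrb. apply Bool.andb_false_iff. left. apply Z.leb_gt. lia. }
  assert (Hser : is_series (fun n => INR (c n) * z ^ n) (GG t h v i)).
  { rewrite <- Heq. unfold SS. eapply is_series_ext; [|apply Series_correct, aa_ex; auto].
    intro n. simpl. f_equal. unfold aa. f_equal.
    destruct (Hc n) as [l [Hl1 [Hl2 Hl3]]]. rewrite Hl3. apply count_eq.
    - apply NoDup_En.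
    - auto.
    - intro p. rewrite En_spec by auto. rewrite Hl2. tauto. }
  unfold GG in Hser. split; intro Hi.
  - rewrite (proj2 (Z.ltb_lt i 0) Hi) in Hser. exact Hser.
  - rewrite (proj2 (Z.ltb_ge i 0) Hi) in Hser. exact Hser.
Qed.
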